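(* Let $B$ be a commutative ring with identity and $A$ a dense subring of $B$. Then the map $\Theta:\min(B)\to\min(A)$, $\Theta(P)=P\cap A$, is a homeomorphism; in particular $\min(A)$ is homeomorphic to $\min(B)$.
   Context: All rings are commutative with identity; subrings contain the identity. For a ring $R$, $\min(R)$ denotes the set of minimal prime ideals of $R$ with the subspace topology induced from the Zariski topology on $\operatorname{spec} R$. A subring $A$ of $B$ is dense in $B$ if for every ideal $I$ of $B$ and every $b\in B\setminus \operatorname{rad}(I)$ there exists $a\in B\setminus\operatorname{rad}(I)$ with $ab\in A$. *)

(* Defs.v *)
(* Subsets of a ring are represented as predicates R -> Prop. *)
From mathcomp Require Import all_boot all_algebra.
Set Implicit Arguments. Unset Strict Implicit. Unset Printing Implicit Defensive.
Import GRing.Theory.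
Local Open Scope ring_scope.

Section Defs.
Variable R : comPzRingType.

Definition is_subring (S : R -> Prop) : Prop :=
  [/\ S 1, (forall x y, S x -> S y -> S (x - y)) & (forall x y, S x -> S y -> S (x * y))].

Definition ideal_of (S : R -> Prop) (I : R -> Prop) : Prop :=
  [/\ (forall x, I x -> S x), I 0, (forall x y, I x -> I y -> I (x + y))
    & (forall a x, S a -> I x -> I (a * x))].

Definition prime_of (S : R -> Prop) (P : R -> Prop) : Prop :=
  [/\ ideal_of S P, ~ P 1
    & (forall x y, S x -> S y -> P (x * y) -> P x \/ P y)].

Definition minprime_of (S : R -> Prop) (P : R -> Prop) : Prop :=
  prime_of S P /\
  (forall Q, prime_of S Q -> (forall x, Q x -> P x) -> forall x, P x -> Q x).

Definition rad (I : R -> Prop) (b : R) : Prop := exists n : nat, I (b ^+ n).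

(* A is dense in B = R (the whole ring). *)
Definition dense (A : R -> Prop) : Prop :=
  forall I, ideal_of (fun _ => True) I ->
  forall b, ~ rad I b -> exists a, ~ rad I a /\ A (a * b).

(* Closed sets of min(S) for the subspace topology induced by the Zariski
   topology on spec S: C is closed iff C = V(X) ∩ min(S) for some X ⊆ S,
   where V(X) = {P prime | X ⊆ P}. Only membership of minimal primes matters. *)
Definition min_closed (S : R -> Prop) (C : (R -> Prop) -> Prop) : Prop :=
  exists X : R -> Prop, (forall x, X x -> S x) /\
    forall P, minprime_of S P -> (C P <-> forall x, X x -> P x).

Definition contract (A : R -> Prop) (P : R -> Prop) : R -> Prop :=
  fun x => A x /\ P x.

Definition min_homeo (S1 S2 : R -> Prop) (f : (R -> Prop) -> (R -> Prop)) : Prop :=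
  [/\ (forall P, minprime_of S1 P -> minprime_of S2 (f P)),
      (forall P Q, minprime_of S1 P -> minprime_of S1 Q -> f P = f Q -> P = Q),
      (forall Q, minprime_of S2 Q -> exists2 P, minprime_of S1 P & f P = Q),
      (forall C, min_closed S2 C -> min_closed S1 (fun P => C (f P)))
    & (forall C, min_closed S1 C ->
        min_closed S2 (fun Q => exists P, [/\ minprime_of S1 P, C P & f P = Q]))].
End Defs.

(* Main.v *)
Require Import Defs.
From mathcomp Require Import all_boot all_algebra.
From mathcomp Require Import zify.
From mathcomp Require Import boolp classical_sets.
From Stdlib Require Import Classical.
Set Implicit Arguments. Unset Strict Implicit. Unset Printing Implicit Defensive.
Import GRing.Theory.
Local Open Scope classical_set_scope.
Local Open Scope ring_scope.

Lemma sub_A0 (B : comPzRingType) (A : B -> Prop) : is_subring A -> A 0.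
Proof. by case=> h1 hs _; rewrite -(subrr 1); exact: hs. Qed.

Lemma sub_AD (B : comPzRingType) (A : B -> Prop) x y :
  is_subring A -> A x -> A y -> A (x + y).
Proof.
move=> hA Ax Ay; have A0 := sub_A0 hA; case: hA => _ hs _.
by have := hs x (0 - y) Ax (hs _ _ A0 Ay); rewrite sub0r opprK.
Qed.

Lemma sub_AX (B : comPzRingType) (A : B -> Prop) x n :
  is_subring A -> A x -> A (x ^+ n).
Proof.
case=> h1 _ hm Ax; elim: n => [|n IH]; first by rewrite expr0.
by rewrite exprS; apply: hm.
Qed.

Lemma prime_pow (B : comPzRingType) (S P : B -> Prop) x n :
  is_subring S -> prime_of S P -> S x -> P (x ^+ n) -> P x.
Proof.
move=> hS [_ P1 Pp] Sx; elim: n => [|n IH]; first by rewrite expr0.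
rewrite exprS => /Pp []; [done | exact: sub_AX | done | exact: IH].
Qed.

Lemma subring_T (B : comPzRingType) : is_subring (fun _ : B => True).
Proof. by []. Qed.

Lemma annih_pow (B : comPzRingType) (s x : B) k j :
  s * x ^+ k = 0 -> (k <= j)%N -> s * x ^+ j = 0.
Proof. by move=> H kj; rewrite -(subnKC kj) exprD mulrA H mul0r. Qed.

Lemma exists_prime (B : comPzRingType) (M : B -> Prop) :
  M 1 -> (forall x y, M x -> M y -> M (x * y)) -> ~ M 0 ->
  exists P : B -> Prop, [/\ prime_of (fun _ => True) P,
    (forall x, M x -> ~ P x) &
    (forall x, P x -> exists s n, ~ P s /\ s * x ^+ n = 0)].
Proof.
move=> M1 Mm M0.
pose good (N : set B) := (forall x y, N x -> N y -> N (x * y)) /\ ~ N 0.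
pose Pz (N : set B) := good (fun x => M x \/ N x).
have := @Zorn_bigcup B Pz.
case.
- move=> F FP Ftot; split.
  + move=> x y [Mx|[X FX Xx]] [My|[Y FY Yy]].
    * by left; apply: Mm.
    * case: (FP Y FY) => hY _; case: (hY x y (or_introl Mx) (or_intror Yy)).
        by left.
      by move=> h; right; exists Y.
    * case: (FP X FX) => hX _; case: (hX x y (or_intror Xx) (or_introl My)).
        by left.
      by move=> h; right; exists X.
    * case: (Ftot X Y FX FY) => sub.
        case: (FP Y FY) => hY _; case: (hY x y (or_intror (sub _ Xx)) (or_intror Yy)).
          by left.
        by move=> h; right; exists Y.
      case: (FP X FX) => hX _; case: (hX x y (or_intror Xx) (or_intror (sub _ Yy))).
        by left.
      by move=> h; right; exists X.
  + case=> [//|[X FX X0]]; case: (FP X FX) => _; apply; by right.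
move=> A0 [[Nm N0] maxA].
pose N := fun x => M x \/ A0 x.
have N1 : N 1 by left.
have NX : forall y k, N y -> N (y ^+ k).
  move=> y k Ny; elim: k => [|k IH]; first by rewrite expr0.
  by rewrite exprS; apply: (Nm).
have key : forall x, ~ N x -> exists s n, N s /\ s * x ^+ n = 0.
  move=> x Nx; apply: NNPP => H.
  pose N' := fun y => exists s n, N s /\ y = s * x ^+ n.
  have NN' : forall y, N y -> N' y by move=> y Ny; exists y, 0%N; rewrite expr0 mulr1.
  have PN' : Pz N'.
    split.
    + move=> y z hy hz; right.
      have {hy} [s1 [n1 [Ns1 ->]]] : N' y by case: hy => [h|//]; apply: NN'; left.
      have {hz} [s2 [n2 [Ns2 ->]]] : N' z by case: hz => [h|//]; apply: NN'; left.
      exists (s1 * s2), (n1 + n2)%N; split; first exact: Nm.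
      by rewrite exprD mulrACA.
    + case=> [//|[s [n [Ns e]]]]; apply: H; exists s, n; split => //.
  have sub : A0 `<=` N' by move=> y Ay; apply: NN'; right.
  have : N' `<=` A0.
    apply: NNPP => nsub; exact: (maxA N' (conj sub nsub) PN').
  move=> /(_ x) h; apply: Nx; right; apply: h.
  by exists 1, 1%N; split => //; rewrite expr1 mul1r.
exists (fun x => ~ N x); split.
- split; [split| |].
  + by [].
  + by [].
  + move=> x y Nx Ny Nxy.
    have [s [n [Ns es]]] := key x Nx; have [t [m [Nt et]]] := key y Ny.
    have : N (s * t * (x + y) ^+ (n + m)) by apply: (Nm); [apply: (Nm)|apply: (NX)].
    suff -> : s * t * (x + y) ^+ (n + m) = 0 by [].
    rewrite exprDn mulr_sumr big1 // => i _.
    rewrite mulrnAr.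
    suff -> : s * t * (x ^+ (n + m - i) * y ^+ i) = 0 by rewrite mul0rn.
    rewrite mulrACA.
    case: (leqP m i) => hi.
      by rewrite (annih_pow et hi) mulr0.
    by rewrite (@annih_pow _ s x n) ?mul0r //; lia.
  + move=> a x _ Nx Nax.
    have [s [n [Ns es]]] := key x Nx.
    have : N (s * (a * x) ^+ n) by apply: (Nm) => //; apply: (NX).
    by rewrite exprMn mulrCA es mulr0.
  + by apply.
  + move=> x y _ _ Nxy; apply: NNPP => H; apply: Nxy; apply: (Nm).
      by apply: NNPP => h; apply: H; left.
    by apply: NNPP => h; apply: H; right.
- by move=> x Mx; apply; left.
- move=> x Nx; have [s [n [Ns es]]] := key x Nx; exists s, n; split => //.
Qed.

Lemma char_min (B : comPzRingType) (P : B -> Prop) :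
  prime_of (fun _ => True) P ->
  (forall x, P x -> exists s n, ~ P s /\ s * x ^+ n = 0) ->
  minprime_of (fun _ => True) P.
Proof.
move=> hP hc; split => // Q hQ QP x Px.
have [s [n [Ps e]]] := hc x Px.
have hQ' := hQ; case: hQ' => [[_ Q0 _ _] _ Qp].
have : Q (s * x ^+ n) by rewrite e.
case/Qp => // [Qs|Qx]; first by case: Ps; apply: QP.
exact: (prime_pow (subring_T B) hQ _ Qx).
Qed.

Lemma minprime_annih (B : comPzRingType) (P : B -> Prop) :
  minprime_of (fun _ => True) P ->
  forall x, P x -> exists s n, ~ P s /\ s * x ^+ n = 0.
Proof.
move=> [hP hmin] x Px.
have hP' := hP; case: hP' => [[_ P0 _ _] P1 Pp].
have [P' [hP' disj hc]] := @exists_prime B (fun x => ~ P x) P1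
  (fun x y hx hy hxy => ltac:(by case: (Pp x y I I hxy))) (fun h => h P0).
have sub : forall y, P' y -> P y by move=> y hy; apply: NNPP => h; exact: disj y h hy.
have [s [n [Ps e]]] := hc x (hmin P' hP' sub x Px).
by exists s, n; split => // /(hmin P' hP' sub).
Qed.

Lemma dense_prime (B : comPzRingType) (A P : B -> Prop) b :
  dense A -> prime_of (fun _ => True) P -> ~ P b -> exists a, ~ P a /\ A (a * b).
Proof.
move=> hd hP Pb.
have [a [ra Aab]] : exists a, ~ Defs.rad P a /\ A (a * b).
  apply: hd; first by case: hP.
  by move=> [n hn]; apply: Pb; exact: (prime_pow (subring_T B) hP _ hn).
by exists a; split => // Pa; apply: ra; exists 1%N; rewrite expr1.
Qed.

Lemma contract_prime (B : comPzRingType) (A P : B -> Prop) :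
  is_subring A -> prime_of (fun _ => True) P -> prime_of A (contract A P).
Proof.
move=> hA [[_ P0 PD PM] P1 Pp]; have hA' := hA; case: hA' => A1 _ Am.
split; first split.
- by move=> x [].
- by split; [exact: sub_A0|].
- by move=> x y [Ax Px] [Ay Py]; split; [exact: sub_AD|exact: PD].
- by move=> a x Aa [Ax Px]; split; [exact: Am|exact: PM].
- by case.
- by move=> x y Ax Ay [_ /(Pp x y I I)] [] ?; [left|right].
Qed.

Lemma contract_le (B : comPzRingType) (A P1 P2 : B -> Prop) :
  dense A -> prime_of (fun _ => True) P1 -> prime_of (fun _ => True) P2 ->
  (forall x, A x -> P1 x -> P2 x) -> forall x, P1 x -> P2 x.
Proof.
move=> hd hP1 hP2 h x P1x; apply: NNPP => P2x.
have [a [P2a Aax]] := dense_prime hd hP2 P2x.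
have hP2' := hP2; case: hP2' => _ _ Pp.
case: hP1 => [[_ _ _ PM] _ _].
by case: (Pp a x I I (h _ Aax (PM a x I P1x))).
Qed.

Lemma contract_min (B : comPzRingType) (A P : B -> Prop) :
  is_subring A -> dense A -> minprime_of (fun _ => True) P ->
  minprime_of A (contract A P).
Proof.
move=> hA hd hPm; have hc := minprime_annih hPm; case: hPm => hP _.
split; first exact: contract_prime.
move=> Q hQ QP x [Ax Px].
have [s [n [Ps e]]] := hc x Px.
have [a [Pa Aas]] := dense_prime hd hP Ps.
have hQ' := hQ; case: hQ' => [[_ Q0 _ _] _ Qp].
have : Q (a * s * x ^+ n) by rewrite -mulrA e mulr0.
case/Qp => //; first exact: sub_AX.
- move=> /QP [_]; case: hP => _ _ Pp; by case/(Pp a s I I).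
- move=> Qx; exact: (prime_pow hA hQ Ax Qx).
Qed.

Lemma contract_surj (B : comPzRingType) (A : B -> Prop) :
  is_subring A -> dense A -> forall Q, minprime_of A Q ->
  exists2 P, minprime_of (fun _ => True) P & contract A P = Q.
Proof.
move=> hA hd Q [hQ Qmin].
have hQ' := hQ; case: hQ' => [[QA Q0 _ _] Q1 Qp].
have hA' := hA; case: hA' => A1 _ Am.
have [P [hP disj hc]] := @exists_prime B (fun x => A x /\ ~ Q x) (conj A1 Q1)
  (fun x y hx hy => ltac:(split; [exact: Am hx.1 hy.1|
     by case/(Qp x y hx.1 hy.1); [exact: hx.2|exact: hy.2]]))
  (fun h => h.2 Q0).
have hPm := char_min hP hc.
exists P => //.
have sub : forall x, contract A P x -> Q x.
  by move=> x [Ax Px]; apply: NNPP => Qx; exact: disj x (conj Ax Qx) Px.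
have sub2 := Qmin _ (contract_prime hA hP) sub.
by apply: funext => x; apply: propext; split; [apply: sub|apply: sub2].
Qed.

Theorem mainTheorem7 (B : comPzRingType) (A : B -> Prop) :
  is_subring A -> dense A ->
  min_homeo (fun _ : B => True) A (contract A).
Proof.
move=> hA hd; split.
- by move=> P hP; exact: contract_min.
- move=> P Q hP hQ e; apply: funext => x; apply: propext.
  have h1 : forall y, A y -> P y -> Q y.
    by move=> y Ay Py; have : contract A P y by []; rewrite e => -[].
  have h2 : forall y, A y -> Q y -> P y.
    by move=> y Ay Qy; have : contract A Q y by []; rewrite -e => -[].
  split; [exact: (contract_le hd hP.1 hQ.1 h1)|exact: (contract_le hd hQ.1 hP.1 h2)].
- exact: contract_surj.
- move=> C [X [XA HX]]; exists X; split => // P hP.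
  rewrite (HX _ (contract_min hA hd hP)).
  split => h x Xx; first by case: (h x Xx).
  by split; [exact: XA|exact: h].
- move=> C [X [_ HX]].
  exists (fun y => A y /\ exists a x, X x /\ y = a * x); split; first by move=> y [].
  move=> Q hQ; split.
  + move=> [P [hP CP <-]] y [Ay [a [x [Xx ey]]]]; subst y; split => //.
    have XP := proj1 (HX P hP) CP.
    case: hP => [[[_ _ _ PM] _ _] _]; apply: (PM) => //.
    exact: XP.
  + move=> h; have [P hP eP] := contract_surj hA hd hQ.
    exists P; split => //; apply/(HX P hP) => x Xx.
    apply: NNPP => Px.
    have [a [Pa Aax]] := dense_prime hd hP.1 Px.
    have : Q (a * x) by apply: h; split => //; exists a, x.
    rewrite -eP => -[_]; case: hP => [[_ _ Pp] _]; by case/(Pp a x I I).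
Qed.
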